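(* Let $N=(S,T,F,M_0,\ell)$ be a Petri net and $N'=(S',T',F',M'_0,\ell')$ be a plain net with $S'\subseteq S$ and $M'_0=M_0\upharpoonright S'$. Suppose there exist sets $T_+ \subseteq T$ and $T_-\subseteq T$ and a class $\mathcal{NF}\subseteq \mathbb{Z}^T$ (of finite signed multisets of transitions), such that (1) $F\upharpoonright(S\cup T_+)$ is acyclic; (2) $F\upharpoonright(S\cup T_-)$ is acyclic; (3) for every $t\in T$ with $\ell(t)\neq\tau$ there is a $t'\in T'$ with $\ell'(t')=\ell(t)$ such that ${}^\bullet t' \leq {}^*t$ and there is a finite multiset $G\in\mathbb{N}^T$ with $\ell(G)\equiv\emptyset$ and $[\![t']\!]=[\![t+G]\!]$; here ${}^*t$ is the multiset of faithful origins of $t$ w.r.t. $T_+$ and $S'\cup\{s\in S \mid M_0(s)>0\}$; (4) there exists a function $f:T\rightarrow\mathbb{N}$ with $f(t)>0$ for all $t\in T$, extended linearly to finite signed multisets ($f(G)=\sum_t G(t)\cdot f(t)$), such that for each finite $G\in \mathbb{Z}^T$ with $\ell(G)\equiv\emptyset$ there is a finite $H\in \mathcal{NF}$ with $\ell(H)\equiv\emptyset$, $[\![H]\!]=[\![G]\!]$ and $f(H)=f(G)$; and (5) for every reachable marking $M'$ of $N'$ there is a finite multiset $H_{M'}\in\mathbb{N}^{T_+}$ with $\ell(H_{M'})\equiv\emptyset$, such that for each finite $H\in \mathcal{NF}$ for which $M:=M'+(M_0-M'_0)+[\![H]\!]$ is a reachable marking of $N$ one has: (a) $M_{M'}:=M'+(M_0-M'_0)+[\![H_{M'}]\!]\in\mathbb{N}^S$;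 (b) if $M'$ enables a transition labelled $a\in\mathrm{Act}$ then $M_{M'}$ enables a transition labelled $a$; (c) $H\leq H_{M'}$; (d) if $H(u)<0$ then $u\in T_-$; (e) if $H(u)<0$ and $H(t)>0$ then ${}^\bullet u \cap {}^\bullet t = \emptyset$; (f) if $H(u)<0$ and $M$ enables $t$ with $\ell(t)\neq\tau$ then ${}^\bullet u \cap {}^\bullet t = \emptyset$. Then $N$ and $N'$ are interleaving branching bisimilar with explicit divergence.
   Context: Petri nets are labelled over $\mathrm{Act}\cup\{\tau\}$ with $\tau$ the invisible action; a net is plain if its labelling is injective and no transition is labelled $\tau$. For a transition $t$, ${}^\bullet t$ and $t^\bullet$ are the multisets of pre- and postplaces (given by arc weights), and the token replacement is $[\![t]\!]=t^\bullet-{}^\bullet t$, extended linearly to finite signed multisets of transitions. For a signed multiset $G$ of transitions, $\ell(G)\equiv\emptyset$ means every transition $t$ with $G(t)\neq 0$ has $\ell(t)=\tau$. Faithful origins: a path is an alternating sequence $x_0x_1\cdots x_n$ of places and transitions with $F(x_i,x_{i+1})>0$, its arc weight being $\prod_i F(x_i,x_{i+1})$; a place $s$ is faithful w.r.t. $T_+$ and $S_+$ iff $|\{s\}\cap S_+|+\sum_{t\in T_+}F(t,s)=1$; a path is faithful iff all nodes $x_i$ with $0\le i<n$ are transitions in $T_+$ or faithful places; and ${}^*x(s)$ is the supremum of the arc weights of faithful paths from $s\in S_+$ to $x$ (0 if none). Interleaving branching bisimilarity with explicit divergence is branching bisimilarity with explicit divergence of the labelled transition systems whose states are markings and whose transitions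 are single firings $M[t\rangle M'$ labelled $\ell(t)$. *)

(* Defs.v *)
(* Petri nets with arbitrary (possibly infinite) place and
   transition types; finite signed multisets of transitions are functions
   Tr -> Z with a finite (NoDup list) support. *)
From Stdlib Require Import ZArith List Relations.
Import ListNotations.
Set Implicit Arguments.

Local Open Scope Z_scope.

(* A labelled Petri net over places Pl, transitions Tr and visible actions Act.
   Labels are [option Act]; [None] is the invisible action tau. *)
Record net (Pl Tr Act : Type) := Net {
  pre  : Pl -> Tr -> nat;
  post : Tr -> Pl -> nat;
  m0   : Pl -> nat;
  lab  : Tr -> option Act
}.
Arguments pre {Pl Tr Act}.
Arguments post {Pl Tr Act}.
Arguments m0 {Pl Tr Act}.
Arguments lab {Pl Tr Act}.

Section Nets.
Context {Pl Tr Act : Type}.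
Implicit Types (N : net Pl Tr Act).

Definition plain N : Prop :=
  (forall t1 t2, lab N t1 = lab N t2 -> t1 = t2) /\ (forall t, lab N t <> None).

Definition enabled N (M : Pl -> nat) (t : Tr) : Prop :=
  forall s, (pre N s t <= M s)%nat.
Definition fire N (M : Pl -> nat) (t : Tr) : Pl -> nat :=
  fun s => (M s - pre N s t + post N t s)%nat.

Definition step N (M : Pl -> nat) (a : option Act) (M' : Pl -> nat) : Prop :=
  exists t, lab N t = a /\ enabled N M t /\ M' = fire N M t.

Definition reachable N (M : Pl -> nat) : Prop :=
  clos_refl_trans _ (fun M1 M2 => exists a, step N M1 a M2) (m0 N) M.

Definition tok N (t : Tr) (s : Pl) : Z := Z.of_nat (post N t s) - Z.of_nat (pre N s t).

Definition pre_disjoint N (u t : Tr) : Prop :=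
  forall s, ~ ((0 < pre N s u)%nat /\ (0 < pre N s t)%nat).

Definition invisible N (G : Tr -> Z) : Prop :=
  forall t, G t <> 0 -> lab N t = None.
End Nets.

Definition lsum {Tr : Type} (l : list Tr) (g : Tr -> Z) : Z :=
  fold_right (fun t acc => g t + acc) 0 l.
Definition fin_supp {Tr : Type} (G : Tr -> Z) (l : list Tr) : Prop :=
  NoDup l /\ forall t, G t <> 0 -> In t l.
Definition finite {Tr : Type} (G : Tr -> Z) : Prop := exists l, fin_supp G l.
Definition FinSum {Tr : Type} (G : Tr -> Z) (g : Tr -> Z) (v : Z) : Prop :=
  exists l, fin_supp G l /\ v = lsum l (fun t => G t * g t).

Definition Repl {Pl Tr Act} (N : net Pl Tr Act) (G : Tr -> Z) (s : Pl) (v : Z) : Prop :=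
  FinSum G (fun t => tok N t s) v.
Definition same_repl {Pl Tr Act} (N : net Pl Tr Act) (G H : Tr -> Z) : Prop :=
  forall s, exists v, Repl N G s v /\ Repl N H s v.
Definition same_fval {Tr} (f : Tr -> nat) (G H : Tr -> Z) : Prop :=
  exists v, FinSum G (fun t => Z.of_nat (f t)) v /\ FinSum H (fun t => Z.of_nat (f t)) v.

Definition marks_sum {Pl Tr Tr' Act} (N : net Pl Tr Act) (N' : net Pl Tr' Act)
  (M' : Pl -> nat) (H : Tr -> Z) (Mn : Pl -> nat) : Prop :=
  forall s, exists v, Repl N H s v /\
    Z.of_nat (Mn s) = Z.of_nat (M' s) + (Z.of_nat (m0 N s) - Z.of_nat (m0 N' s)) + v.

Definition flow {Pl Tr Act} (N : net Pl Tr Act) (x y : Pl + Tr) : nat :=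
  match x, y with
  | inl s, inr t => pre N s t
  | inr t, inl s => post N t s
  | _, _ => 0%nat
  end.

Definition acyclic_restr {Pl Tr Act} (N : net Pl Tr Act) (X : Tr -> Prop) : Prop :=
  let inP (x : Pl + Tr) := match x with inl _ => True | inr t => X t end in
  forall x, ~ clos_trans _ (fun a b => inP a /\ inP b /\ (0 < flow N a b)%nat) x x.

(* faithful place w.r.t. T+ and S+:  |{s} n S+| + sum_{t in T+} F(t,s) = 1 *)
Definition faithful_place {Pl Tr Act} (N : net Pl Tr Act) (Tp : Tr -> Prop) (Sp : Pl -> Prop)
  (s : Pl) : Prop :=
  (Sp s /\ forall t, Tp t -> post N t s = 0%nat) \/
  (~ Sp s /\ exists t, Tp t /\ post N t s = 1%nat /\
       forall t2, Tp t2 -> t2 <> t -> post N t2 s = 0%nat).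

Definition faithful_node {Pl Tr Act} (N : net Pl Tr Act) (Tp : Tr -> Prop) (Sp : Pl -> Prop)
  (x : Pl + Tr) : Prop :=
  match x with inl s => faithful_place N Tp Sp s | inr t => Tp t end.

Fixpoint faithful_path {Pl Tr Act} (N : net Pl Tr Act) (Tp : Tr -> Prop) (Sp : Pl -> Prop)
  (x : Pl + Tr) (xs : list (Pl + Tr)) : Prop :=
  match xs with
  | [] => True
  | y :: ys => faithful_node N Tp Sp x /\ (0 < flow N x y)%nat /\ faithful_path N Tp Sp y ys
  end.

Fixpoint path_weight {Pl Tr Act} (N : net Pl Tr Act) (x : Pl + Tr) (xs : list (Pl + Tr)) : nat :=
  match xs with
  | [] => 1%nat
  | y :: ys => (flow N x y * path_weight N y ys)%nat
  end.

(* n <= *x(s), where *x(s) is the supremum of the arc weights of faithful paths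
   from s in S+ to x (0 if none).  Since weights are naturals, the supremum is
   >= n iff n = 0 or some such path has weight >= n. *)
Definition origin_ge {Pl Tr Act} (N : net Pl Tr Act) (Tp : Tr -> Prop) (Sp : Pl -> Prop)
  (x : Pl + Tr) (s : Pl) (n : nat) : Prop :=
  n = 0%nat \/
  (Sp s /\ exists xs, faithful_path N Tp Sp (inl s) xs /\ last xs (inl s) = x /\
                      (n <= path_weight N (inl s) xs)%nat).

Section Bisim.
Context {A X Y : Type}.

Definition tau_star {Z0 : Type} (st : Z0 -> option A -> Z0 -> Prop) : Z0 -> Z0 -> Prop :=
  clos_refl_trans _ (fun p q => st p None q).

Definition bb_transfer {X0 Y0 : Type} (stX : X0 -> option A -> X0 -> Prop)
  (stY : Y0 -> option A -> Y0 -> Prop) (B : X0 -> Y0 -> Prop) : Prop :=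
  forall p q a p', B p q -> stX p a p' ->
    (a = None /\ B p' q) \/
    exists q1 q2, tau_star stY q q1 /\ stY q1 a q2 /\ B p q1 /\ B p' q2.

Definition div_transfer {X0 Y0 : Type} (stX : X0 -> option A -> X0 -> Prop)
  (stY : Y0 -> option A -> Y0 -> Prop) (B : X0 -> Y0 -> Prop) : Prop :=
  forall p q (ps : nat -> X0), B p q -> ps 0%nat = p ->
    (forall k, stX (ps k) None (ps (k + 1)%nat)) -> (forall k, B (ps k) q) ->
    exists qs : nat -> Y0, qs 0%nat = q /\ (forall l, stY (qs l) None (qs (l + 1)%nat)) /\
       forall k l, B (ps k) (qs l).

Definition bbisim_div (stX : X -> option A -> X -> Prop) (stY : Y -> option A -> Y -> Prop)
  (B : X -> Y -> Prop) : Prop :=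
  bb_transfer stX stY B /\ bb_transfer stY stX (fun q p => B p q) /\
  div_transfer stX stY B /\ div_transfer stY stX (fun q p => B p q).

Definition bbisimilar_div (stX : X -> option A -> X -> Prop) (stY : Y -> option A -> Y -> Prop)
  (x0 : X) (y0 : Y) : Prop :=
  exists B, bbisim_div stX stY B /\ B x0 y0.
End Bisim.

Definition net_ibbd {Pl Pl' Tr Tr' Act} (N : net Pl Tr Act) (N' : net Pl' Tr' Act) : Prop :=
  bbisimilar_div (step N) (step N') (m0 N) (m0 N').

(* Main.v *)
Require Import Defs.
From Stdlib Require Import ZArith List Relations Lia Permutation ClassicalEpsilon Classical FunctionalExtensionality.
Import ListNotations.
Module Aux.
Local Open Scope Z_scope.

Definition cdec (P : Prop) : {P} + {~P} := excluded_middle_informative P.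
Definition tdec {T : Type} (x y : T) : {x = y} + {x <> y} := cdec (x = y).
Definition ind {T : Type} (a : T) (c : Z) : T -> Z := fun y => if cdec (y = a) then c else 0.

Section LS.
Context {A : Type}.
Implicit Types (l : list A) (f g : A -> Z).

Lemma lsum_cons a l g : lsum (a::l) g = g a + lsum l g.
Proof. reflexivity. Qed.
Lemma lsum_ext l f g : (forall x, In x l -> f x = g x) -> lsum l f = lsum l g.
Proof. induction l; simpl; intros H; auto. rewrite H by auto; rewrite IHl; auto. Qed.
Lemma lsum_add l f g : lsum l (fun x => f x + g x) = lsum l f + lsum l g.
Proof. induction l; simpl; lia. Qed.
Lemma lsum_scal l c f : lsum l (fun x => c * f x) = c * lsum l f.
Proof. induction l; simpl; [ring|]. rewrite IHl; ring. Qed.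
Lemma lsum_opp l f : lsum l (fun x => - f x) = - lsum l f.
Proof. induction l; simpl; lia. Qed.
Lemma lsum_sub l f g : lsum l (fun x => f x - g x) = lsum l f - lsum l g.
Proof. induction l; simpl; lia. Qed.
Lemma lsum_le l f g : (forall x, In x l -> f x <= g x) -> lsum l f <= lsum l g.
Proof. induction l; simpl; intros H; [lia|]. assert (f a <= g a) by (apply H; auto).
  assert (lsum l f <= lsum l g) by (apply IHl; auto). lia. Qed.
Lemma lsum_app l1 l2 f : lsum (l1++l2) f = lsum l1 f + lsum l2 f.
Proof. induction l1; simpl; lia. Qed.
Lemma lsum_perm l1 l2 f : Permutation l1 l2 -> lsum l1 f = lsum l2 f.
Proof. induction 1; simpl; lia. Qed.
Lemma lsum_zero l f : (forall x, In x l -> f x = 0) -> lsum l f = 0.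
Proof. intros H; rewrite (lsum_ext l f (fun _ => 0)) by auto. clear H. induction l; simpl; lia. Qed.
Lemma lsum_filter p l f : (forall x, In x l -> p x = false -> f x = 0) ->
  lsum (filter p l) f = lsum l f.
Proof. induction l; simpl; intros H; auto. destruct (p a) eqn:E; simpl.
  - rewrite IHl; auto.
  - rewrite H by auto. rewrite IHl; auto. Qed.
Lemma lsum_ind_out l a c : ~ In a l -> lsum l (ind a c) = 0.
Proof. intros H; apply lsum_zero; intros x Hx; unfold ind; destruct (cdec (x = a)); subst; tauto. Qed.
Lemma lsum_ind l a c : NoDup l -> In a l -> lsum l (ind a c) = c.
Proof. induction l as [|b l IH]; simpl; intros Hn Hi; [tauto|]. inversion Hn; subst.
  unfold ind at 1; destruct (cdec (b = a)).
  - subst. rewrite lsum_ind_out; auto; lia.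
  - destruct Hi; [congruence|]. rewrite IH; auto. Qed.
End LS.

Lemma supp_any {T} (G : T -> Z) (g : T -> Z) l1 l2 :
  fin_supp G l1 -> fin_supp G l2 -> lsum l1 (fun t => G t * g t) = lsum l2 (fun t => G t * g t).
Proof.
  intros [N1 S1] [N2 S2].
  set (p := fun t => negb (G t =? 0)).
  assert (Hz : forall l, lsum (filter p l) (fun t => G t * g t) = lsum l (fun t => G t * g t)).
  { intros l; apply lsum_filter. intros x _ Hp; unfold p in Hp; apply Bool.negb_false_iff, Z.eqb_eq in Hp;
    rewrite Hp; ring. }
  rewrite <- (Hz l1), <- (Hz l2).
  apply lsum_perm, NoDup_Permutation; try apply NoDup_filter; auto.
  intro x; rewrite !filter_In; unfold p; split; intros [_ H]; split; auto;
  (apply S1 || apply S2); intro E; rewrite E in H; discriminate.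
Qed.

Lemma FinSum_any {T} (G g : T -> Z) v l : FinSum G g v -> fin_supp G l -> v = lsum l (fun t => G t * g t).
Proof. intros [l1 [H1 ->]] H2. apply supp_any; auto. Qed.

Lemma FinSum_of {T} (G g : T -> Z) l : fin_supp G l -> FinSum G g (lsum l (fun t => G t * g t)).
Proof. intros H; exists l; auto. Qed.

Definition ulist {T} (l : list T) := nodup tdec l.
Lemma ulist_supp {T} (G : T -> Z) l L : fin_supp G l -> incl l L -> fin_supp G (ulist L).
Proof. intros [_ H] Hi; split; [apply NoDup_nodup|]. intros t Ht; apply nodup_In; auto. Qed.
Lemma ulist_nodup {T} (L : list T) : NoDup (ulist L).
Proof. apply NoDup_nodup. Qed.
Local Open Scope Z_scope.

Lemma lsum_le_one {A} (l : list A) (g : A -> Z) a : NoDup l -> (~ In a l -> g a = 0) ->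
  (forall y, In y l -> y <> a -> g y <= 0) -> lsum l g <= g a.
Proof.
  intros Hn Ha Hy. apply Z.le_trans with (lsum l (ind a (g a))).
  - apply lsum_le; intros x Hx; unfold ind; destruct (cdec (x = a)); subst; auto. lia.
  - destruct (classic (In a l)). rewrite lsum_ind; auto; lia. rewrite lsum_ind_out; auto. rewrite Ha; auto; lia.
Qed.

Lemma lsum_le_two {A} (l : list A) (g : A -> Z) a b : NoDup l -> a <> b -> (~ In a l -> g a = 0) ->
  (~ In b l -> g b = 0) ->
  (forall y, In y l -> y <> a -> y <> b -> g y <= 0) -> lsum l g <= g a + g b.
Proof.
  intros Hn Hab Ha Hb Hy. apply Z.le_trans with (lsum l (fun x => ind a (g a) x + ind b (g b) x)).
  - apply lsum_le; intros x Hx; unfold ind; destruct (cdec (x = a)); destruct (cdec (x = b)); subst; try congruence; try lia.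
    specialize (Hy x Hx n n0). lia.
  - rewrite lsum_add. apply Z.add_le_mono.
    destruct (classic (In a l)). rewrite lsum_ind; auto; lia. rewrite lsum_ind_out; auto. rewrite Ha; auto; lia.
    destruct (classic (In b l)). rewrite lsum_ind; auto; lia. rewrite lsum_ind_out; auto. rewrite Hb; auto; lia.
Qed.

Lemma lsum_nonneg_zero {A} (l : list A) (g : A -> Z) : (forall x, 0 <= g x) -> lsum l g = 0 ->
  forall x, In x l -> g x = 0.
Proof.
  induction l; simpl; intros H0 Hs x Hx; [tauto|].
  assert (0 <= lsum l g).
  { apply Z.le_trans with (lsum l (fun _ => 0)). rewrite lsum_zero. lia. auto. apply lsum_le; auto. }
  pose proof (H0 a). destruct Hx; subst. lia. apply IHl; auto. lia.
Qed.

Lemma exists_min {T} (R : T -> T -> Prop) : (forall x, ~ clos_trans T R x x) ->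
  forall l x, In x l -> exists m, In m l /\ (m = x \/ clos_trans T R m x) /\ forall y, In y l -> ~ R y m.
Proof.
  intros Hac l; induction l as [|a l IH]; simpl; [tauto|].
  assert (Ca : exists m, (a = m \/ In m l) /\ (m = a \/ clos_trans T R m a) /\ forall y, a = y \/ In y l -> ~ R y m).
  { destruct (classic (exists y, (a = y \/ In y l) /\ R y a)) as [[y [Hy Ry]]|Hn].
    - assert (Hyl : In y l). { destruct Hy; auto. subst. exfalso; apply (Hac y); constructor; auto. }
      destruct (IH y Hyl) as [m [Hm [Hmy Hmin]]].
      exists m; split; auto; split.
      + right. destruct Hmy. subst; constructor; auto. eapply t_trans; eauto. constructor; auto.
      + intros z [Ez|Hz] Rz; [subst z|eapply Hmin; eauto].
        apply (Hac a). destruct Hmy. subst. eapply t_trans; constructor; eauto.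
        eapply t_trans. constructor; eauto. eapply t_trans; eauto. constructor; auto.
    - exists a; split; auto; split; auto. intros y Hy Ry; apply Hn; eauto. }
  intros x [<-|Hx]; [exact Ca|].
  destruct (IH x Hx) as [m [Hm [Hmx Hmin]]].
  destruct (classic (R a m)) as [Ram|Ram].
  - destruct Ca as [m2 [Hm2 [Hm2a Hmin2]]]. exists m2; split; auto; split; auto.
    right. assert (clos_trans T R a x). { destruct Hmx. subst; constructor; auto. eapply t_trans; [constructor; eauto|auto]. }
    destruct Hm2a. subst; auto. eapply t_trans; eauto.
  - exists m; split; auto; split; auto. intros y [Ey|Hy]; [subst y|]; auto.
Qed.

Section NetL.
Context {Pl Tr Act : Type} (N : net Pl Tr Act).

Lemma fire_Z M t s : enabled N M t -> Z.of_nat (fire N M t s) = Z.of_nat (M s) + tok N t s.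
Proof. intros H; specialize (H s); unfold fire, tok; lia. Qed.

Definition Rel (X : Tr -> Prop) (y x : Tr) : Prop :=
  X y /\ X x /\ exists p, (0 < post N y p)%nat /\ (0 < pre N p x)%nat.

Lemma Rel_acyc X : acyclic_restr N X -> forall x, ~ clos_trans _ (Rel X) x x.
Proof.
  intros Hac x Hc. apply (Hac (inr x)).
  assert (forall y z, clos_trans _ (Rel X) y z -> clos_trans _ (fun a b => (match a with inl _ => True | inr t => X t end) /\
    (match b with inl _ => True | inr t => X t end) /\ (0 < flow N a b)%nat) (inr y) (inr z)).
  { induction 1. destruct H as [Hy [Hx [p [H1 H2]]]]. apply t_trans with (inl p); apply t_step; simpl; auto.
    eapply t_trans; eauto. }
  apply H; auto.
Qed.

Lemma fire_lemma (X : Tr -> Prop) : acyclic_restr N X ->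
  forall n (D : Tr -> Z) l M, fin_supp D l -> (forall t, 0 <= D t) -> (forall t, D t <> 0 -> X t) ->
   invisible N D -> lsum l D = Z.of_nat n ->
   (forall s, 0 <= Z.of_nat (M s) + lsum l (fun t => D t * tok N t s)) ->
   exists M2, tau_star (step N) M M2 /\
     forall s, Z.of_nat (M2 s) = Z.of_nat (M s) + lsum l (fun t => D t * tok N t s).
Proof.
  intros Hac n; induction n as [|n IH]; intros D l M [Hnd Hsp] Hpos HX Hinv Hsum Hfin.
  - exists M; split; [apply rt_refl|]. intros s.
    rewrite lsum_zero; [lia|]. intros x Hx. rewrite (lsum_nonneg_zero l D Hpos Hsum x Hx); ring.
  - set (lf := filter (fun t => 0 <? D t) l).
    assert (Hex : exists x0, In x0 lf).
    { destruct (classic (exists x0, In x0 lf)) as [h|h]; auto. exfalso.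
      assert (lsum l D = 0). { apply lsum_zero; intros x Hx. specialize (Hpos x).
        destruct (Z.eq_dec (D x) 0); auto. exfalso; apply h; exists x; unfold lf; apply filter_In; split; auto; lia. }
      lia. }
    destruct Hex as [x0 Hx0].
    destruct (exists_min (Rel X) (Rel_acyc X Hac) lf x0 Hx0) as [m [Hm [_ Hmin]]].
    unfold lf in Hm; apply filter_In in Hm; destruct Hm as [Hml HDm]. apply Z.ltb_lt in HDm.
    assert (Xm : X m) by (apply HX; lia).
    assert (Hen : enabled N M m).
    { intros p. destruct (Nat.eq_dec (pre N p m) 0) as [E|E]; [lia|].
      specialize (Hfin p).
      assert (Hpost : post N m p = 0%nat).
      { destruct (Nat.eq_dec (post N m p) 0); auto. exfalso. apply (Rel_acyc X Hac m). constructor.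
        split; auto; split; auto. exists p; lia. }
      assert (lsum l (fun t => D t * tok N t p) <= D m * tok N m p).
      { apply (lsum_le_one l (fun t => D t * tok N t p) m); auto. intros Hc; contradiction. intros y Hy Hyn. destruct (Z.eq_dec (D y) 0) as [E0|E0]. rewrite E0; lia.
        assert (Hyf : In y lf) by (apply filter_In; split; auto; apply Z.ltb_lt; specialize (Hpos y); lia).
        assert (post N y p = 0%nat).
        { destruct (Nat.eq_dec (post N y p) 0); auto. exfalso. apply (Hmin y Hyf).
          split; auto; split; auto. exists p; lia. }
        unfold tok. rewrite H. specialize (Hpos y). nia. }
      unfold tok in H. rewrite Hpost in H.
      assert (D m * Z.of_nat (pre N p m) >= Z.of_nat (pre N p m)) by nia. unfold tok in Hfin. rewrite Z.mul_opp_r in H. lia. }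
    set (D1 := fun y => D y - ind m 1 y).
    assert (HD1 : forall y, D1 y <> 0 -> D y <> 0).
    { intros y; unfold D1, ind; destruct (cdec (y = m)); subst; lia. }
    assert (Htok : forall s, lsum l (fun t => D1 t * tok N t s) = lsum l (fun t => D t * tok N t s) - tok N m s).
    { intros s. rewrite <- (lsum_ind l m (tok N m s)) by auto. rewrite <- lsum_sub.
      apply lsum_ext; intros y _; unfold D1, ind; destruct (cdec (y = m)); subst; ring. }
    destruct (IH D1 l (fire N M m)) as [M2 [Hst Heq]].
    + split; auto.
    + intros t; unfold D1, ind; destruct (cdec (t = m)); subst; [lia|]. specialize (Hpos t); lia.
    + intros t Ht; apply HX, HD1; auto.
    + intros t Ht; apply Hinv, HD1; auto.
    + unfold D1. rewrite lsum_sub, lsum_ind; auto. lia.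
    + intros s. rewrite Htok, fire_Z; auto. specialize (Hfin s). lia.
    + exists M2; split.
      * eapply rt_trans; [apply rt_step|exact Hst]. exists m; split; auto. apply Hinv; lia.
      * intros s. rewrite Heq, Htok, fire_Z; auto. lia.
Qed.

End NetL.

Lemma crt_preserve {T} (R : T -> T -> Prop) (P : T -> Prop) :
  (forall x y, R x y -> P x -> P y) -> forall x y, clos_refl_trans T R x y -> P x -> P y.
Proof. intros H x y C; induction C; eauto. Qed.
Local Open Scope Z_scope.

Lemma FinSum_unique {T} (G g : T -> Z) v w : FinSum G g v -> FinSum G g w -> v = w.
Proof. intros Hv [l [Hl ->]]. apply (FinSum_any G g v l Hv Hl). Qed.

Lemma pw_pos {Pl Tr Act} (N : net Pl Tr Act) Tp Sp x xs :
  faithful_path N Tp Sp x xs -> (0 < path_weight N x xs)%nat.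
Proof. revert x; induction xs; simpl; intros x H; [lia|]. destruct H as [_ [H1 H2]].
  specialize (IHxs _ H2). nia. Qed.

Lemma last_indep {T} (l : list T) d d' : l <> [] -> last l d = last l d'.
Proof. induction l as [|a l IH]; intros Hn; [congruence|]. destruct l; simpl; auto. apply IH; discriminate. Qed.
Lemma last_cons_d {T} (y : T) l d : last (y :: l) d = last l y.
Proof. destruct l as [|a l]; [reflexivity|]. change (last (a :: l) d = last (a :: l) y). apply last_indep; discriminate. Qed.

Section Main.
Context {Pl Tr Tr' Act : Type} (N : net Pl Tr Act) (N' : net Pl Tr' Act) (S' : Pl -> Prop)
  (Tplus Tminus : Tr -> Prop).
Context (HS' : forall s t', ~ S' s -> pre N' s t' = 0%nat /\ post N' t' s = 0%nat)
  (Hm0 : forall s, (S' s -> m0 N' s = m0 N s) /\ (~ S' s -> m0 N' s = 0%nat))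
  (Hac1 : acyclic_restr N Tplus).

Definition Sp := fun s0 => S' s0 \/ (0 < m0 N s0)%nat.

Lemma ms_to M' G Mn l : marks_sum N N' M' G Mn -> fin_supp G l -> forall s,
  Z.of_nat (Mn s) = Z.of_nat (M' s) + (Z.of_nat (m0 N s) - Z.of_nat (m0 N' s)) + lsum l (fun t => G t * tok N t s).
Proof. intros H Hl s. destruct (H s) as [v [HR Heq]]. rewrite Heq. rewrite (FinSum_any _ _ v l HR Hl). ring. Qed.

Lemma ms_of M' G Mn l : fin_supp G l -> (forall s,
  Z.of_nat (Mn s) = Z.of_nat (M' s) + (Z.of_nat (m0 N s) - Z.of_nat (m0 N' s)) + lsum l (fun t => G t * tok N t s)) ->
  marks_sum N N' M' G Mn.
Proof. intros Hl H s. exists (lsum l (fun t => G t * tok N t s)); split; auto. exists l; auto. Qed.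

Lemma reach'_zero M' : reachable N' M' -> forall s, ~ S' s -> M' s = 0%nat.
Proof.
  intros Hr. apply (crt_preserve (fun M1 M2 => exists a, step N' M1 a M2) (fun M => forall s, ~ S' s -> M s = 0%nat)) with (x := m0 N'); auto.
  - intros x y [a [t [_ [_ ->]]]] Hx s Hs. unfold fire. rewrite Hx by auto. destruct (HS' s t Hs); lia.
  - intros s Hs; apply Hm0; auto.
Qed.

Lemma m0_le s : (m0 N' s <= m0 N s)%nat.
Proof. destruct (classic (S' s)). rewrite (proj1 (Hm0 s)); auto. rewrite (proj2 (Hm0 s)); auto; lia. Qed.

Lemma two_cycle x r : Tplus x -> (0 < post N x r)%nat -> (0 < pre N r x)%nat -> False.
Proof.
  intros Hx H1 H2. apply (Hac1 (inl r)). apply t_trans with (inr x); apply t_step; simpl; auto.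
Qed.

Section F.
Context (M' M : Pl -> nat) (H HM : Tr -> Z) (lH : list Tr) (t : Tr)
  (Hr' : reachable N' M') (HlH : fin_supp H lH) (Hms : marks_sum N N' M' H M)
  (HMp : forall u, 0 <= HM u) (HMT : forall u, HM u <> 0 -> Tplus u) (Hc : forall u, H u <= HM u)
  (He : forall u x, H u < 0 -> 0 < H x -> pre_disjoint N u x)
  (Hf : forall u x, H u < 0 -> enabled N M x -> lab N x <> None -> pre_disjoint N u x)
  (Hen : enabled N M t) (Hvis : lab N t <> None).

Lemma HposT x : 0 < H x -> Tplus x.
Proof. intros. apply HMT. specialize (Hc x). lia. Qed.

Lemma notin0 x : ~ In x lH -> H x = 0.
Proof. intros Hn. destruct (Z.eq_dec (H x) 0); auto. exfalso; apply Hn, (proj2 HlH); auto. Qed.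

Lemma L1 : forall n ys x r, (length ys <= n)%nat -> Tplus x -> (0 < post N x r)%nat ->
  faithful_path N Tplus Sp (inl r) ys -> last ys (inl r) = inr t ->
  Z.of_nat (path_weight N (inr x) (inl r :: ys)) <= H x.
Proof.
  induction n as [|n IH]; intros ys x r Hlen Tx Hxr Hp Hlast.
  { destruct ys; [simpl in Hlast; discriminate|simpl in Hlen; lia]. }
  destruct ys as [|y ys']; [simpl in Hlast; discriminate|].
  destruct Hp as [Hfr [Hfl Hp']].
  destruct y as [r0|x2]; [simpl in Hfl; lia|]. simpl in Hfl.
  destruct Hfr as [[_ Hz]|[HnSp [t0 [Tt0 [Hpt0 Huniq]]]]].
  { specialize (Hz x Tx); lia. }
  assert (Ex : x = t0). { destruct (classic (x = t0)); auto. specialize (Huniq x Tx H0); lia. }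
  subst t0.
  assert (HS'r : ~ S' r) by (intro; apply HnSp; left; auto).
  assert (Hm0r : m0 N r = 0%nat) by (destruct (m0 N r) eqn:E; auto; exfalso; apply HnSp; right; lia).
  assert (Hm0'r : m0 N' r = 0%nat) by (apply Hm0; auto).
  assert (HM'r : M' r = 0%nat) by (apply (reach'_zero M'); auto).
  assert (Hpre0 : pre N r x = 0%nat) by (destruct (Nat.eq_dec (pre N r x) 0); auto; exfalso; apply (two_cycle x r Tx); lia).
  pose proof (ms_to _ _ _ _ Hms HlH r) as Eq. rewrite Hm0r, Hm0'r, HM'r in Eq. simpl in Eq.
  assert (Hother : forall y, In y lH -> y <> x -> 0 < H y -> post N y r = 0%nat).
  { intros y _ Hyx Hy. apply Huniq; auto. apply HposT; auto. }
  destruct ys' as [|y3 ys''].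
  - simpl in Hlast. injection Hlast as ->.
    assert (Hb : lsum lH (fun u => H u * tok N u r) <= H x * tok N x r).
    { apply (lsum_le_one lH (fun u => H u * tok N u r) x); auto. apply HlH.
      intros Hn; rewrite notin0; auto; ring.
      intros y Hy Hyx. destruct (Z.lt_total (H y) 0) as [Hl|[Hl|Hl]].
      - assert (pre N r y = 0%nat).
        { destruct (Nat.eq_dec (pre N r y) 0); auto. exfalso. apply (Hf y t Hl Hen Hvis r); lia. }
        unfold tok; rewrite H0. nia.
      - rewrite Hl; lia.
      - unfold tok; rewrite Hother; auto. nia. }
    unfold tok in Hb at 2. rewrite Hpt0, Hpre0 in Hb. simpl. rewrite Hpt0.
    specialize (Hen r). lia.
  - destruct Hp' as [Tx2 [Hfl2 Hp'']].
    destruct y3 as [r2|x3]; [|simpl in Hfl2; lia]. simpl in Hfl2.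
    assert (IHx2 := IH ys'' x2 r2 ltac:(simpl in Hlen; lia) Tx2 Hfl2 Hp'' ltac:(rewrite !last_cons_d in Hlast; exact Hlast)).
    assert (Hpw2 := pw_pos _ _ _ _ _ Hp'').
    assert (Hx2pos : 0 < H x2).
    { simpl in IHx2. assert (0 < post N x2 r2 * path_weight N (inl r2) ys'')%nat by nia. lia. }
    assert (Hx2x : x2 <> x) by (intro; subst; lia).
    assert (Hpost2 : post N x2 r = 0%nat) by (apply Huniq; auto).
    assert (Hb : lsum lH (fun u => H u * tok N u r) <= H x * tok N x r + H x2 * tok N x2 r).
    { apply (lsum_le_two lH (fun u => H u * tok N u r) x x2 (proj1 HlH) (fun e => Hx2x (eq_sym e))); auto.
      intros Hn; rewrite notin0; auto; ring.
      intros Hn; rewrite notin0; auto; ring.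
      intros y Hy Hyx Hyx2. destruct (Z.lt_total (H y) 0) as [Hl|[Hl|Hl]].
      - assert (pre N r y = 0%nat).
        { destruct (Nat.eq_dec (pre N r y) 0); auto. exfalso. apply (He y x2 Hl Hx2pos r); lia. }
        unfold tok; rewrite H0. nia.
      - rewrite Hl; lia.
      - unfold tok; rewrite Hother; auto. nia. }
    unfold tok in Hb. rewrite Hpt0, Hpre0, Hpost2 in Hb.
    change (path_weight N (inr x) (inl r :: inr x2 :: inl r2 :: ys''))
      with (post N x r * (pre N r x2 * path_weight N (inr x2) (inl r2 :: ys'')))%nat.
    rewrite Hpt0. simpl in IHx2 |- *.
    set (w := (post N x2 r2 * path_weight N (inl r2) ys'')%nat) in *.
    assert (H x2 * Z.of_nat (pre N r x2) >= Z.of_nat w * Z.of_nat (pre N r x2)) by nia.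
    unfold tok in Eq. rewrite Nat2Z.inj_add, Nat2Z.inj_mul. simpl Z.of_nat in *. nia.
Qed.

Lemma lemF t' : (forall s, origin_ge N Tplus Sp (inr t) s (pre N' s t')) -> enabled N' M' t'.
Proof.
  intros Hog s. destruct (Hog s) as [E|[HSp [xs [Hp [Hlast Hle]]]]]; [rewrite E; lia|].
  destruct (Nat.eq_dec (pre N' s t') 0) as [E|E]; [lia|].
  assert (HSs : S' s) by (destruct (classic (S' s)); auto; exfalso; apply E, HS'; auto).
  pose proof (ms_to _ _ _ _ Hms HlH s) as Eq. rewrite (proj1 (Hm0 s) HSs) in Eq.
  destruct xs as [|y ys]; [simpl in Hlast; discriminate|].
  destruct Hp as [Hfs [Hfl Hp']].
  destruct y as [r0|x]; [simpl in Hfl; lia|]. simpl in Hfl.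
  destruct Hfs as [[_ Hz]|[HnSp _]]; [|contradiction].
  assert (Hneg : forall y, H y < 0 -> forall x0, 0 < H x0 \/ (enabled N M x0 /\ lab N x0 <> None) ->
     (0 < pre N s x0)%nat -> pre N s y = 0%nat).
  { intros y Hy x0 Hx0 Hp0. destruct (Nat.eq_dec (pre N s y) 0); auto. exfalso.
    destruct Hx0 as [Hx0|[Hx0 Hx0']]; [apply (He y x0 Hy Hx0 s)|apply (Hf y x0 Hy Hx0 Hx0' s)]; lia. }
  destruct ys as [|y2 ys'].
  - simpl in Hlast. injection Hlast as ->.
    assert (Hb : lsum lH (fun u => H u * tok N u s) <= lsum lH (fun _ => 0)).
    { apply lsum_le. intros y Hy. destruct (Z.lt_total (H y) 0) as [Hl|[Hl|Hl]].
      - unfold tok; rewrite (Hneg y Hl t); auto. nia.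
      - rewrite Hl; lia.
      - unfold tok; rewrite Hz by (apply HposT; auto). nia. }
    rewrite (lsum_zero lH (fun _ => 0)) in Hb by auto. unfold tok in Eq. simpl in Hle. specialize (Hen s). unfold tok in Hb. lia.
  - destruct Hp' as [Tx [Hfl2 Hp'']].
    destruct y2 as [r|x3]; [|simpl in Hfl2; lia]. simpl in Hfl2.
    assert (HL := L1 (length ys') ys' x r ltac:(lia) Tx Hfl2 Hp'' ltac:(rewrite !last_cons_d in Hlast; exact Hlast)).
    assert (Hpw := pw_pos _ _ _ _ _ Hp'').
    assert (Hxpos : 0 < H x).
    { simpl in HL. assert (0 < post N x r * path_weight N (inl r) ys')%nat by nia. lia. }
    assert (Hb : lsum lH (fun u => H u * tok N u s) <= H x * tok N x s).
    { apply (lsum_le_one lH (fun u => H u * tok N u s) x); auto. apply HlH.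
      intros Hn; rewrite notin0; auto; ring.
      intros y Hy Hyx. destruct (Z.lt_total (H y) 0) as [Hl|[Hl|Hl]].
      - unfold tok; rewrite (Hneg y Hl x); auto. nia.
      - rewrite Hl; lia.
      - unfold tok; rewrite Hz by (apply HposT; auto). nia. }
    unfold tok in Hb. rewrite (Hz x Tx) in Hb.
    change (path_weight N (inl s) (inr x :: inl r :: ys'))
      with (pre N s x * path_weight N (inr x) (inl r :: ys'))%nat in Hle.
    set (w := path_weight N (inr x) (inl r :: ys')) in *.
    assert (H x * Z.of_nat (pre N s x) >= Z.of_nat w * Z.of_nat (pre N s x)) by nia.
    apply Nat2Z.inj_le in Hle. rewrite Nat2Z.inj_mul in Hle. apply Nat2Z.inj_le. unfold tok in Eq. simpl Z.of_nat in *. nia.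
Qed.
End F.
End Main.
Local Open Scope Z_scope.

Section M2.
Context {Pl Tr Tr' Act : Type} (N : net Pl Tr Act) (N' : net Pl Tr' Act).

Lemma fs_union (G K : Tr -> Z) lG lK : fin_supp G lG -> fin_supp K lK ->
  fin_supp G (ulist (lG ++ lK)) /\ fin_supp K (ulist (lG ++ lK)) /\
  fin_supp (fun y => G y + K y) (ulist (lG ++ lK)).
Proof.
  intros HG HK. split; [|split].
  - apply (ulist_supp G lG); auto. intros x Hx; apply in_or_app; auto.
  - apply (ulist_supp K lK); auto. intros x Hx; apply in_or_app; auto.
  - split; [apply ulist_nodup|]. intros t Ht. apply nodup_In, in_or_app.
    destruct (Z.eq_dec (G t) 0); [right; apply HK; lia|left; apply HG; auto].
Qed.

Lemma ms_gen M1' M1 M2' M2 G K lG lK : marks_sum N N' M1' G M1 -> fin_supp G lG -> fin_supp K lK ->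
  (forall s, Z.of_nat (M2 s) - Z.of_nat (M2' s) = Z.of_nat (M1 s) - Z.of_nat (M1' s) + lsum lK (fun t => K t * tok N t s)) ->
  marks_sum N N' M2' (fun y => G y + K y) M2.
Proof.
  intros Hms HG HK Heq. destruct (fs_union G K lG lK HG HK) as [HG' [HK' HGK]].
  apply (ms_of N N' _ _ _ _ HGK). intros s.
  specialize (Heq s). rewrite (ms_to N N' _ _ _ _ Hms HG' s) in Heq.
  rewrite (supp_any K _ lK (ulist (lG ++ lK)) HK HK') in Heq.
  rewrite (lsum_ext _ _ (fun t => G t * tok N t s + K t * tok N t s)) by (intros; ring).
  rewrite lsum_add. lia.
Qed.

Lemma ms_repl M' M G H : marks_sum N N' M' G M -> finite G -> finite H -> same_repl N H G ->
  marks_sum N N' M' H M.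
Proof.
  intros Hms [lG HG] [lH HH] Hs s. destruct (Hs s) as [v [RH RG]]. exists v; split; auto.
  rewrite (ms_to N N' _ _ _ _ Hms HG s). rewrite <- (FinSum_any _ _ v lG RG HG). ring.
Qed.

Lemma lemE (Tplus Tminus : Tr -> Prop) (S' : Pl -> Prop)
  (Hm0 : forall s, (S' s -> m0 N' s = m0 N s) /\ (~ S' s -> m0 N' s = 0%nat))
  (Hac1 : acyclic_restr N Tplus) (Hac2 : acyclic_restr N Tminus)
  M' M MM H HM lH lHM : fin_supp H lH -> fin_supp HM lHM -> marks_sum N N' M' H M ->
  marks_sum N N' M' HM MM -> (forall u, 0 <= HM u) -> (forall u, HM u <> 0 -> Tplus u) ->
  invisible N HM -> invisible N H -> (forall u, H u <= HM u) -> (forall u, H u < 0 -> Tminus u) ->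
  (forall u x, H u < 0 -> 0 < H x -> pre_disjoint N u x) ->
  tau_star (step N) M MM.
Proof.
  intros HlH HlHM HmsH HmsHM HMp HMT HMi HHi Hc Hd He.
  destruct (fs_union H HM lH lHM HlH HlHM) as [HL [HML _]].
  set (L := ulist (lH ++ lHM)) in *.
  set (Dneg := fun u => Z.max 0 (- H u)).
  set (Dpos := fun u => HM u - Z.max 0 (H u)).
  assert (HDn : fin_supp Dneg L).
  { split; [apply ulist_nodup|]. intros t Ht; apply HL. unfold Dneg in Ht; lia. }
  assert (HDp : fin_supp Dpos L).
  { split; [apply ulist_nodup|]. intros t Ht. unfold Dpos in Ht.
    destruct (Z.eq_dec (HM t) 0). apply HL. specialize (Hc t). lia. apply HML; auto. }
  assert (EqM := ms_to N N' _ _ _ _ HmsH HL).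
  assert (EqMM := ms_to N N' _ _ _ _ HmsHM HML).
  assert (Hm0le : forall s, (m0 N' s <= m0 N s)%nat).
  { intros s. destruct (classic (S' s)). rewrite (proj1 (Hm0 s)); auto. rewrite (proj2 (Hm0 s)); auto; lia. }
  assert (Hnn : forall l (D : Tr -> Z), (forall u, 0 <= D u) -> 0 <= lsum l D).
  { intros l D HD. apply Z.le_trans with (lsum l (fun _ => 0)). rewrite lsum_zero; auto; lia. apply lsum_le; auto. }
  destruct (fire_lemma N Tminus Hac2 (Z.to_nat (lsum L Dneg)) Dneg L M HDn) as [M2 [St1 Eq2]].
  - intros u; unfold Dneg; lia.
  - intros u Hu; apply Hd; unfold Dneg in Hu; lia.
  - intros u Hu; apply HHi; unfold Dneg in Hu; lia.
  - rewrite Z2Nat.id; auto. apply Hnn; intros; unfold Dneg; lia.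
  - intros p. destruct (classic (exists u, H u < 0 /\ (0 < pre N p u)%nat)) as [[u [Hu Hpu]]|Hno].
    + rewrite EqM. rewrite <- Z.add_assoc, <- lsum_add.
      assert (0 <= lsum L (fun t => H t * tok N t p + Dneg t * tok N t p)).
      { apply Z.le_trans with (lsum L (fun _ => 0)). rewrite lsum_zero; auto; lia. apply lsum_le.
        intros x _. unfold Dneg. destruct (Z.lt_total (H x) 0) as [Hl|[Hl|Hl]].
        - rewrite Z.max_r by lia. lia.
        - rewrite Hl; lia.
        - rewrite Z.max_l by lia. assert (pre N p x = 0%nat).
          { destruct (Nat.eq_dec (pre N p x) 0); auto. exfalso; apply (He u x Hu Hl p); lia. }
          unfold tok; rewrite H0. nia. }
      specialize (Hm0le p). lia.
    + assert (0 <= lsum L (fun t => Dneg t * tok N t p)).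
      { apply Z.le_trans with (lsum L (fun _ => 0)). rewrite lsum_zero; auto; lia. apply lsum_le.
        intros x _. unfold Dneg. destruct (Z.lt_total (H x) 0) as [Hl|Hl].
        - assert (pre N p x = 0%nat).
          { destruct (Nat.eq_dec (pre N p x) 0); auto. exfalso; apply Hno; exists x; split; auto; lia. }
          unfold tok; rewrite H0. nia.
        - rewrite Z.max_l by lia. lia. }
      lia.
  - destruct (fire_lemma N Tplus Hac1 (Z.to_nat (lsum L Dpos)) Dpos L M2 HDp) as [M3 [St2 Eq3]].
    + intros u; unfold Dpos; specialize (Hc u); specialize (HMp u); lia.
    + intros u Hu; apply HMT; unfold Dpos in Hu; specialize (Hc u); lia.
    + intros u Hu; apply HMi; unfold Dpos in Hu; specialize (Hc u); lia.
    + rewrite Z2Nat.id; auto. apply Hnn; intros u; unfold Dpos; specialize (Hc u); specialize (HMp u); lia.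
    + intros p. rewrite Eq2, EqM.
      assert (Hs : lsum L (fun t => H t * tok N t p) + lsum L (fun t => Dneg t * tok N t p) +
                lsum L (fun t => Dpos t * tok N t p) = lsum L (fun t => HM t * tok N t p)).
      { rewrite <- !lsum_add. apply lsum_ext; intros x _; unfold Dneg, Dpos.
        destruct (Z.lt_total (H x) 0) as [Hl|Hl]; [rewrite Z.max_r, Z.max_l by lia|rewrite Z.max_l, Z.max_r by lia]; ring. }
      specialize (EqMM p). lia.
    + replace MM with M3. eapply rt_trans; eauto.
      apply functional_extensionality; intros p. apply Nat2Z.inj. rewrite Eq3, Eq2, EqM, EqMM.
      assert (Hs : lsum L (fun t => H t * tok N t p) + lsum L (fun t => Dneg t * tok N t p) +
                lsum L (fun t => Dpos t * tok N t p) = lsum L (fun t => HM t * tok N t p)).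
      { rewrite <- !lsum_add. apply lsum_ext; intros x _; unfold Dneg, Dpos.
        destruct (Z.lt_total (H x) 0) as [Hl|Hl]; [rewrite Z.max_r, Z.max_l by lia|rewrite Z.max_l, Z.max_r by lia]; ring. }
      lia.
Qed.
End M2.
End Aux.
Import Aux.

Lemma tau_reach {Pl Tr Act} (N : net Pl Tr Act) x y : tau_star (step N) x y -> reachable N x -> reachable N y.
Proof. intros Ht Hr. unfold reachable. eapply rt_trans; [exact Hr|]. clear Hr.
  induction Ht as [a b Hs| |a b c _ IH1 _ IH2]. apply rt_step; exists None; exact Hs. apply rt_refl. eapply rt_trans; eauto. Qed.

Lemma reach_step {Pl Tr Act} (N : net Pl Tr Act) x a y : reachable N x -> step N x a y -> reachable N y.
Proof. intros Hr Hs. eapply rt_trans; [exact Hr|apply rt_step; eauto]. Qed.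

Lemma fs_ind {T} (t : T) : fin_supp (ind t 1%Z) [t].
Proof. split. constructor; [simpl; tauto|constructor]. intros y Hy; unfold ind in Hy; destruct (cdec (y = t)); subst; simpl; auto. Qed.

Lemma fs_opp {T} (G : T -> Z) l : fin_supp G l -> fin_supp (fun y => (- G y)%Z) l.
Proof. intros [Hn Hs]; split; auto. intros t Ht; apply Hs; lia. Qed.

Theorem theorem6p11 (Pl Tr Tr' Act : Type)
  (N : net Pl Tr Act) (N' : net Pl Tr' Act) (S' : Pl -> Prop)
  (Tplus Tminus : Tr -> Prop) (NF : (Tr -> Z) -> Prop) :
  (* N' is plain, its places are S' (a subset of the places of N) *)
  plain N' ->
  (forall s t', ~ S' s -> pre N' s t' = 0%nat /\ post N' t' s = 0%nat) ->
  (* M'_0 = M_0 restricted to S' *)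
  (forall s, (S' s -> m0 N' s = m0 N s) /\ (~ S' s -> m0 N' s = 0%nat)) ->
  (* (1), (2) *)
  acyclic_restr N Tplus ->
  acyclic_restr N Tminus ->
  (* (3) *)
  (forall t, lab N t <> None ->
     exists t', lab N' t' = lab N t /\
       (forall s, origin_ge N Tplus (fun s0 => S' s0 \/ (0 < m0 N s0)%nat)
                    (inr t) s (pre N' s t')) /\
       exists G : Tr -> Z, finite G /\ (forall u, (0 <= G u)%Z) /\ invisible N G /\
         forall s, exists v, Repl N G s v /\ tok N' t' s = (tok N t s + v)%Z) ->
  (* (4) *)
  (exists f : Tr -> nat, (forall t, (0 < f t)%nat) /\
     forall G : Tr -> Z, finite G -> invisible N G ->
       exists H, NF H /\ finite H /\ invisible N H /\ same_repl N H G /\ same_fval f H G) ->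
  (* (5) *)
  (forall M', reachable N' M' ->
     exists HM : Tr -> Z, finite HM /\ (forall u, (0 <= HM u)%Z) /\
       (forall u, HM u <> 0%Z -> Tplus u) /\ invisible N HM /\
       forall H : Tr -> Z, NF H -> finite H ->
       forall M : Pl -> nat, marks_sum N N' M' H M -> reachable N M ->
         (* (a) and (b) *)
         (exists MM : Pl -> nat, marks_sum N N' M' HM MM /\
            forall a, (exists t', lab N' t' = Some a /\ enabled N' M' t') ->
                      exists t, lab N t = Some a /\ enabled N MM t) /\
         (* (c) *) (forall u, (H u <= HM u)%Z) /\
         (* (d) *) (forall u, (H u < 0)%Z -> Tminus u) /\
         (* (e) *) (forall u t, (H u < 0)%Z -> (0 < H t)%Z -> pre_disjoint N u t) /\
         (* (f) *) (forall u t, (H u < 0)%Z -> enabled N M t -> lab N t <> None ->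
                      pre_disjoint N u t)) ->
  net_ibbd N N'.
Proof.
  intros Hplain HS' Hm0 Hac1 Hac2 H3 [f [Hfpos H4]] H5.
  set (B := fun (M M' : Pl -> nat) => reachable N M /\ reachable N' M' /\
        exists G, finite G /\ invisible N G /\ marks_sum N N' M' G M).
  assert (NFrep : forall M M', B M M' -> exists H HM lH lHM, NF H /\ fin_supp H lH /\ invisible N H /\
     marks_sum N N' M' H M /\ fin_supp HM lHM /\ (forall u, (0 <= HM u)%Z) /\
     (forall u, HM u <> 0%Z -> Tplus u) /\ invisible N HM /\
     (exists MM, marks_sum N N' M' HM MM /\ forall a, (exists t', lab N' t' = Some a /\ enabled N' M' t') ->
          exists t, lab N t = Some a /\ enabled N MM t) /\
     (forall u, (H u <= HM u)%Z) /\ (forall u, (H u < 0)%Z -> Tminus u) /\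
     (forall u t, (H u < 0)%Z -> (0 < H t)%Z -> pre_disjoint N u t) /\
     (forall u t, (H u < 0)%Z -> enabled N M t -> lab N t <> None -> pre_disjoint N u t)).
  { intros M M' [Hr [Hr' [G [HfG [HiG HmsG]]]]].
    destruct (H4 G HfG HiG) as [H [NFH [HfH [HiH [Hsr _]]]]].
    assert (HmsH := ms_repl N N' M' M G H HmsG HfG HfH Hsr).
    destruct (H5 M' Hr') as [HM [HfHM [HMp [HMT [HMi Hall]]]]].
    destruct (Hall H NFH HfH M HmsH Hr) as [Hab [Hc [Hd [He Hf]]]].
    destruct HfH as [lH HlH]. destruct HfHM as [lHM HlHM].
    exists H, HM, lH, lHM. do 12 (split; [assumption|]). assumption. }
  exists B. split; [split; [|split; [|split]]|].
  -
    intros M M' a M1 HB [t [Hlab [Hent ->]]].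
    pose proof HB as HB0.
    destruct HB as [Hr [Hr' [G [[lG HlG] [HiG HmsG]]]]].
    destruct (lab N t) as [a0|] eqn:El.
    + right. subst a.
      destruct (H3 t ltac:(congruence)) as [t' [Hl' [Hog [Gt [[lGt HlGt] [_ [HiGt HGt]]]]]]].
      destruct (NFrep M M' HB0) as [H [HM [lH [lHM [_ [HlH [_ [HmsH [_ [HMp [HMT [_ [_ [Hc [_ [He Hf]]]]]]]]]]]]]]]].
      assert (Hen' : enabled N' M' t').
      { eapply (lemF N N' S' Tplus HS' Hm0 Hac1 M' M H HM lH t); eauto. congruence. }
      exists M', (fire N' M' t'). split; [apply rt_refl|]. split.
      { exists t'; split; [congruence|split; auto]. }
      split; [exact HB0|].
      split; [eapply reach_step; eauto; exists t; auto|].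
      split; [eapply reach_step; eauto; exists t'; split; [reflexivity|auto]|].
      exists (fun y => (G y + - Gt y)%Z).
      destruct (fs_union G (fun y => (- Gt y)%Z) lG lGt HlG (fs_opp Gt lGt HlGt)) as [_ [_ HU]].
      split; [exists (ulist (lG ++ lGt)); exact HU|].
      split; [intros y Hy; destruct (Z.eq_dec (G y) 0); [apply HiGt; lia|apply HiG; auto]|].
      apply (ms_gen N N' M' M _ _ G _ lG lGt HmsG HlG (fs_opp Gt lGt HlGt)).
      intros s. destruct (HGt s) as [v [Rv Ev]].
      rewrite (FinSum_any _ _ v lGt Rv HlGt) in Ev.
      rewrite (fire_Z N), (fire_Z N') by auto.
      rewrite (lsum_ext _ _ (fun t0 => - (Gt t0 * tok N t0 s))%Z) by (intros; ring).
      rewrite lsum_opp. lia.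
    + left. split; [congruence|].
      split; [eapply reach_step; eauto; exists t; auto|]. split; [auto|].
      exists (fun y => (G y + ind t 1 y)%Z).
      destruct (fs_union G (ind t 1%Z) lG [t] HlG (fs_ind t)) as [_ [_ HU]].
      split; [exists (ulist (lG ++ [t])); exact HU|].
      split.
      { intros y Hy. destruct (Z.eq_dec (G y) 0); [|apply HiG; auto].
        unfold ind in Hy; destruct (cdec (y = t)); subst; auto. lia. }
      apply (ms_gen N N' M' M _ _ G _ lG [t] HmsG HlG (fs_ind t)).
      intros s. rewrite (fire_Z N) by auto. simpl. unfold ind. destruct (cdec (t = t)); [|congruence]. lia.
  -
    intros M' M a M'1 HB [t' [Hlab [Hent' ->]]]. cbv beta in HB.
    right.
    destruct a as [a0|]; [|exfalso; exact (proj2 Hplain t' Hlab)].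
    pose proof HB as HB0. destruct HB0 as [Hr [Hr' _]].
    destruct (NFrep M M' HB) as [H [HM [lH [lHM [_ [HlH [HiH [HmsH [HlHM [HMp [HMT [HMi [[MM [HmsMM Hb]] [Hc [Hd [He _]]]]]]]]]]]]]]]].
    destruct (Hb a0 (ex_intro _ t' (conj Hlab Hent'))) as [t [Hlt Hent]].
    assert (Hst : tau_star (step N) M MM).
    { eapply (lemE N N' Tplus Tminus S' Hm0 Hac1 Hac2 M' M MM H HM lH lHM); eauto. }
    destruct (H3 t ltac:(congruence)) as [t'' [Hl'' [_ [Gt [[lGt HlGt] [_ [HiGt HGt]]]]]]].
    assert (t'' = t') by (apply (proj1 Hplain); congruence). subst t''.
    exists MM, (fire N MM t). split; auto. split; [exists t; auto|].
    assert (HrMM : reachable N MM) by (eapply tau_reach; eauto).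
    split.
    { split; auto. split; auto. exists HM. split; [exists lHM; auto|split; auto]. }
    split; [eapply reach_step; eauto; exists t; auto|].
    split; [eapply reach_step; eauto; exists t'; split; [reflexivity|auto]|].
    exists (fun y => (HM y + - Gt y)%Z).
    destruct (fs_union HM (fun y => (- Gt y)%Z) lHM lGt HlHM (fs_opp Gt lGt HlGt)) as [_ [_ HU]].
    split; [exists (ulist (lHM ++ lGt)); exact HU|].
    split; [intros y Hy; destruct (Z.eq_dec (HM y) 0); [apply HiGt; lia|apply HMi; auto]|].
    apply (ms_gen N N' M' MM _ _ HM _ lHM lGt HmsMM HlHM (fs_opp Gt lGt HlGt)).
    intros s. destruct (HGt s) as [v [Rv Ev]].
    rewrite (FinSum_any _ _ v lGt Rv HlGt) in Ev.
    rewrite (fire_Z N), (fire_Z N') by auto.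
    rewrite (lsum_ext _ _ (fun t0 => - (Gt t0 * tok N t0 s))%Z) by (intros; ring).
    rewrite lsum_opp. lia.
  -
    intros M M' ps HB Hps0 Hstep Hall. exfalso.
    destruct HB as [Hr [Hr' [G0 [[lG0 HlG0] [HiG0 HmsG0]]]]].
    set (v0 := lsum lG0 (fun t => (G0 t * Z.of_nat (f t))%Z)).
    assert (Grow : forall k, exists G lG', fin_supp G lG' /\ invisible N G /\ marks_sum N N' M' G (ps k) /\
               (v0 + Z.of_nat k <= lsum lG' (fun t => G t * Z.of_nat (f t)))%Z).
    { induction k as [|k IH].
      - exists G0, lG0. rewrite Hps0. split; auto. split; auto. split; auto. unfold v0; lia.
      - destruct IH as [G [lG [HlG [HiG [Hms Hv]]]]].
        destruct (Hstep k) as [t [Hlt [Hent Heq]]].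
        destruct (fs_union G (ind t 1%Z) lG [t] HlG (fs_ind t)) as [HG' [HI' HU]].
        exists (fun y => (G y + ind t 1 y)%Z), (ulist (lG ++ [t])).
        split; auto. split.
        { intros y Hy. destruct (Z.eq_dec (G y) 0); [|apply HiG; auto].
          unfold ind in Hy; destruct (cdec (y = t)); subst; auto. lia. }
        split.
        + replace (S k) with (k + 1)%nat by lia. rewrite Heq.
          apply (ms_gen N N' M' (ps k) _ _ G _ lG [t] Hms HlG (fs_ind t)).
          intros s. rewrite (fire_Z N) by auto. simpl. unfold ind. destruct (cdec (t = t)); [|congruence]. lia.
        + rewrite (lsum_ext _ _ (fun y => G y * Z.of_nat (f y) + ind t (Z.of_nat (f t)) y)%Z).
          2:{ intros y _. unfold ind. destruct (cdec (y = t)); subst; ring. }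
          rewrite lsum_add, lsum_ind; [|apply ulist_nodup|apply nodup_In, in_or_app; right; simpl; auto].
          rewrite <- (supp_any G _ lG _ HlG HG'). specialize (Hfpos t). lia. }
    destruct (H5 M' Hr') as [HM [[lHM HlHM] [HMp [HMT [HMi Hall5]]]]].
    set (vHM := lsum lHM (fun t => (HM t * Z.of_nat (f t))%Z)).
    set (K := (Z.to_nat (vHM - v0) + 1)%nat).
    destruct (Grow K) as [G [lG [HlG [HiG [Hms Hv]]]]].
    destruct (H4 G (ex_intro _ lG HlG) HiG) as [H [NFH [HfH [HiH [Hsr [w [Fw1 Fw2]]]]]]].
    assert (HmsH := ms_repl N N' M' (ps K) G H Hms (ex_intro _ lG HlG) HfH Hsr).
    destruct (Hall K) as [HrK _].
    destruct (Hall5 H NFH HfH (ps K) HmsH HrK) as [_ [Hc _]].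
    rewrite <- (FinSum_any _ _ w lG Fw2 HlG) in Hv.
    destruct HfH as [lH HlH].
    destruct (fs_union H HM lH lHM HlH HlHM) as [HL [HML _]].
    rewrite (FinSum_any _ _ w _ Fw1 HL) in Hv.
    assert (lsum (ulist (lH ++ lHM)) (fun t => (H t * Z.of_nat (f t))%Z) <= vHM)%Z.
    { unfold vHM. rewrite (supp_any HM _ lHM _ HlHM HML). apply lsum_le. intros x _.
      specialize (Hc x). nia. }
    unfold K in Hv. lia.
  -
    intros p q ps _ _ Hstep _. exfalso. destruct (Hstep 0%nat) as [t [Hl _]]. exact (proj2 Hplain t Hl).
  - split; [apply rt_refl|split; [apply rt_refl|]].
    exists (fun _ => 0%Z). split; [exists []; split; [constructor|intros t Ht; congruence]|].
    split; [intros t Ht; congruence|].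
    apply (ms_of N N' _ _ _ []). split; [constructor|intros t Ht; congruence].
    intros s; simpl; lia.
Qed.
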